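(* Let $\psi:\mathcal{Q}\to\mathcal{P}$ be a full upper semilattice morphism with $\mathcal{Q}$ finite and $\uparrow\psi(\mathcal{Q})=\mathcal{P}$. For all $A,B\subseteq\mathcal{Q}$ such that every $b\in B$ satisfies $a\le b$ for some $a\in A$, we have \[ \mathrm{Lan}_\psi\big(\mathbb{k}_{\uparrow A\setminus\uparrow B}\big)\cong\mathbb{k}_{\uparrow\psi(A)\setminus\uparrow\psi(B)}, \] where upsets are taken in $\mathcal{Q}$ and $\mathcal{P}$ respectively. In particular, $\mathrm{Lan}_\psi$ maps spread-decomposable representations to spread-decomposable representations.
   Context: Fix a field $\mathbb{k}$. Upper semilattice, full morphism, upper semilattice morphism as usual (joins of finite nonempty sets exist/are preserved; $\psi(q)\le\psi(q')\Rightarrow q\le q'$). $\uparrow X=\{p:\exists x\in X,x\le p\}$. For convex $S$ (i.e. $s\le p\le s'$ with $s,s'\in S$ implies $p\in S$), $\mathbb{k}_S$ is the indicator representation. $\mathrm{Lan}_\psi:\operatorname{rep}\mathcal{Q}\to\operatorname{rep}\mathcal{P}$ is the left adjoint of restriction $M\mapsto M\circ\psi$, and equals precomposition with $\lfloor-\rfloor_\psi$, where $\lfloor p\rfloor_\psi=\bigvee\{q:\psi(q)\le p\}$. A spread is a nonempty convex, zigzag-connected subset; a representation is spread-decomposable if it is isomorphic to a finite direct sum of finitely presented spread representations $\mathbb{k}_S$. *)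

(* Defs.v *)
From HB Require Import structures.
From mathcomp Require Import all_boot all_order all_algebra.
Set Implicit Arguments. Unset Strict Implicit. Unset Printing Implicit Defensive.
Import Order.TTheory GRing.Theory.
Local Open Scope order_scope.
Delimit Scope ring_scope with R.

(* A vector space at x is k^(rdim x) (row vectors); the structure map for
   x <= y is v |-> v *m rmap x y.  [rmap x y] is only meaningful for x <= y. *)
Record rep (k : fieldType) (T : Type) := Rep {
  rdim : T -> nat;
  rmap : forall x y : T, 'M[k]_(rdim x, rdim y) }.

Definition is_rep (k : fieldType) d (T : porderType d) (M : rep k T) : Prop :=
  (forall x, rmap M x x = (1%:M)%R) /\
  (forall x y z, x <= y -> y <= z -> (rmap M x y *m rmap M y z = rmap M x z)%R).

Definition is_morph (k : fieldType) d (T : porderType d) (M N : rep k T)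
  (f : forall x, 'M[k]_(rdim M x, rdim N x)) : Prop :=
  forall x y, x <= y -> (rmap M x y *m f y = f x *m rmap N x y)%R.

Definition rep_iso (k : fieldType) d (T : porderType d) (M N : rep k T) : Prop :=
  exists (f : forall x, 'M[k]_(rdim M x, rdim N x))
         (g : forall x, 'M[k]_(rdim N x, rdim M x)),
    [/\ is_morph f, is_morph g,
        forall x, (f x *m g x = (1%:M)%R)%R & forall x, (g x *m f x = (1%:M)%R)%R].

Definition convex d (T : porderType d) (S : pred T) : Prop :=
  forall s p s', S s -> S s' -> s <= p -> p <= s' -> S p.

Definition zigzag_connected d (T : porderType d) (S : pred T) : Prop :=
  forall s s', S s -> S s' ->
    exists c : seq T, [/\ all S c, path (fun x y => x >=< y) s c & last s c = s'].

Definition spread d (T : porderType d) (S : pred T) : Prop :=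
  (exists s, S s) /\ convex S /\ zigzag_connected S.

Definition indicator (k : fieldType) (T : Type) (S : pred T) : rep k T :=
  @Rep k T (fun x => if S x then 1%N else 0%N) (fun x y => const_mx 1%R).

Definition rep0 (k : fieldType) (T : Type) : rep k T :=
  @Rep k T (fun _ => 0%N) (fun _ _ => 0%R).

Definition dsum (k : fieldType) (T : Type) (M N : rep k T) : rep k T :=
  @Rep k T (fun x => (rdim M x + rdim N x)%N)
    (fun x y => block_mx (rmap M x y) 0%R 0%R (rmap N x y)).

Definition dsum_seq (k : fieldType) (T : Type) (Ms : seq (rep k T)) : rep k T :=
  foldr (@dsum k T) (rep0 k T) Ms.

Definition upset1 d (T : porderType d) (g : T) : pred T := fun x => g <= x.

Definition free_rep (k : fieldType) d (T : porderType d) (gs : seq T) : rep k T :=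
  dsum_seq [seq indicator k (upset1 g) | g <- gs].

(* finitely presented: cokernel of a morphism of finitely generated frees,
   i.e. there is an exact sequence F1 -> F0 -> M -> 0 *)
Definition fin_pres (k : fieldType) d (T : porderType d) (M : rep k T) : Prop :=
  exists (gs0 gs1 : seq T)
         (f1 : forall x, 'M[k]_(rdim (free_rep k gs1) x, rdim (free_rep k gs0) x))
         (f0 : forall x, 'M[k]_(rdim (free_rep k gs0) x, rdim M x)),
    [/\ is_morph f1, is_morph f0,
        forall x, row_full (f0 x) &
        forall x, (kermx (f0 x) == f1 x)%MS].

Definition spread_decomposable (k : fieldType) d (T : porderType d) (M : rep k T) : Prop :=
  exists Ss : seq (pred T),
    (forall i, (i < size Ss)%N -> spread (nth (fun _ => false) Ss i) /\ fin_pres (indicator k (nth (fun _ => false) Ss i))) /\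
    rep_iso M (dsum_seq [seq indicator k X | X <- Ss]).

Definition usl_morph dQ dP (Q : joinSemilatticeType dQ) (P : joinSemilatticeType dP)
  (psi : Q -> P) : Prop := forall q q', psi (q `|` q') = psi q `|` psi q'.

Definition full dQ dP (Q : porderType dQ) (P : porderType dP) (psi : Q -> P) : Prop :=
  forall q q', psi q <= psi q' -> q <= q'.

Definition upQ dQ (Q : finPOrderType dQ) (A : {set Q}) : pred Q :=
  fun q => [exists a in A, a <= q].
Definition upP dQ dP (Q : finPOrderType dQ) (P : porderType dP) (psi : Q -> P)
  (A : {set Q}) : pred P := fun p => [exists a in A, psi a <= p].
Definition setdiff (T : Type) (X Y : pred T) : pred T := fun x => X x && ~~ Y x.

Definition floor dQ dP (Q : finJoinSemilatticeType dQ) (P : porderType dP)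
  (psi : Q -> P) (p : P) : option Q :=
  match [pick q | psi q <= p] with
  | Some q0 => Some (\big[Order.join/q0]_(q | psi q <= p) q)
  | None => None
  end.

(* Lan_psi M = M o floor_psi  (precomposition with the floor map) *)
Definition Lan (k : fieldType) dQ dP (Q : finJoinSemilatticeType dQ) (P : porderType dP)
  (psi : Q -> P) (M : rep k Q) : rep k P :=
  @Rep k P (fun p => oapp (rdim M) 0%N (floor psi p))
    (fun p p' =>
       match floor psi p as a, floor psi p' as b
       return 'M[k]_(oapp (rdim M) 0%N a, oapp (rdim M) 0%N b) with
       | Some x, Some y => rmap M x y
       | _, _ => 0%R
       end).

(* Main.v *)
Require Import Defs.
From HB Require Import structures.
From mathcomp Require Import all_boot all_order all_algebra.
Local Open Scope order_scope.
Import Order.TTheory.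
From Stdlib Require Import FunctionalExtensionality.
Set Implicit Arguments. Unset Strict Implicit. Unset Printing Implicit Defensive.

Definition Comp (k : fieldType) (Q P : Type) (M : rep k Q) (g : P -> Q) : rep k P :=
  @Rep k P (fun p => rdim M (g p)) (fun p p' => rmap M (g p) (g p')).

Definition LanH (k : fieldType) (Q P : Type) (h : P -> option Q) (M : rep k Q) : rep k P :=
  @Rep k P (fun p => oapp (rdim M) 0%N (h p))
    (fun p p' =>
       match h p as a, h p' as b
       return 'M[k]_(oapp (rdim M) 0%N a, oapp (rdim M) 0%N b) with
       | Some x, Some y => rmap M x y
       | _, _ => 0%R
       end).

Lemma rep_iso_refl (k : fieldType) d (T : porderType d) (M : rep k T) : rep_iso M M.
Proof.
exists (fun x => 1%:M%R), (fun x => 1%:M%R); split => // [x y _|x y _|x|x];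
  by rewrite ?mulmx1 ?mul1mx.
Qed.

Lemma comp_iso (k : fieldType) d d' (T : porderType d) (T' : porderType d')
  (g : T' -> T) (gm : forall x y, x <= y -> g x <= g y) (M N : rep k T) :
  rep_iso M N -> rep_iso (Comp M g) (Comp N g).
Proof.
case=> f [h [mf mh fh hf]].
exists (fun x => f (g x)), (fun x => h (g x)); split.
- move=> x y le; exact: mf (gm _ _ le).
- move=> x y le; exact: mh (gm _ _ le).
- move=> x; exact: fh.
- move=> x; exact: hf.
Qed.

Lemma big_join_ge d (I : finType) (T : joinSemilatticeType d) (x0 : T) (P : pred I)
  (F : I -> T) i : P i -> F i <= \big[Order.join/x0]_(j | P j) F j.
Proof.
move=> Pi.
have : i \in index_enum I by rewrite mem_index_enum.
elim: (index_enum I) => [//|j s IH]; rewrite inE.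
rewrite big_cons; case: eqP => [<- _|_ /= /IH H]; first by rewrite Pi leUl.
by case: (P j) => //; exact: (le_trans H (leUr _ _)).
Qed.

Lemma Efree (k : fieldType) dQ dP (Q : porderType dQ) (P : porderType dP)
  (psi : Q -> P) (g : P -> Q) (key : forall q p, (q <= g p) = (psi q <= p)) gs :
  Comp (free_rep k gs) g = free_rep k (map psi gs).
Proof.
rewrite /free_rep; elim: gs => //= a gs IH.
rewrite -IH.
have E : (fun p => upset1 a (g p)) = upset1 (psi a).
  by apply: functional_extensionality => p; rewrite /upset1 key.
rewrite -E. by [].
Qed.

Lemma fin_pres_comp (k : fieldType) dQ dP (Q : porderType dQ) (P : porderType dP)
  (psi : Q -> P) (g : P -> Q) (key : forall q p, (q <= g p) = (psi q <= p))
  (gm : forall x y, x <= y -> g x <= g y) (N : rep k Q) :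
  fin_pres N -> fin_pres (Comp N g).
Proof.
case=> gs0 [gs1 [f1 [f0 [m1 m0 rf ker]]]].
exists (map psi gs0), (map psi gs1).
rewrite -!(Efree k key).
exists (fun x => f1 (g x)), (fun x => f0 (g x)); split => //.
- by move=> x y le; exact: m1 (gm _ _ le).
- by move=> x y le; exact: m0 (gm _ _ le).
- by move=> x; exact: rf.
- by move=> x; exact: ker.
Qed.

Theorem mainTheorem9 (k : fieldType) (dQ dP : Order.disp_t)
  (Q : finJoinSemilatticeType dQ) (P : joinSemilatticeType dP) (psi : Q -> P)
  (Hmorph : usl_morph psi) (Hfull : full psi)
  (Hup : forall p : P, exists q : Q, psi q <= p) :
  (forall A B : {set Q},
     (forall b, b \in B -> exists2 a, a \in A & a <= b) ->
     rep_iso (Lan psi (indicator k (setdiff (upQ A) (upQ B))))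
             (indicator k (setdiff (upP psi A) (upP psi B)))) /\
  (forall M : rep k Q, is_rep M -> spread_decomposable M ->
     spread_decomposable (Lan psi M)).
Proof.
pose g p := odflt (xchoose (Hup p)) (floor psi p).
have mono : forall q q', q <= q' -> psi q <= psi q'.
  by move=> q q' le; rewrite -(join_r le) Hmorph leUl.
have fS : forall p, floor psi p = Some (g p).
  move=> p; rewrite /g; case E: (floor psi p) => [q|] //.
  exfalso; move: E; rewrite /floor; case: pickP => // H _.
  by have [q1 Hq1] := Hup p; move: (H q1); rewrite Hq1.
have key : forall q p, (q <= g p) = (psi q <= p).
  move=> q p; rewrite /g /floor; case: pickP => [q0 Hq0 /=|H]; last first.
    by have [q1 Hq1] := Hup p; move: (H q1); rewrite Hq1.
  set J := \big[_/_]_(_ | _) _.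
  have HJ : psi J <= p.
    rewrite /J; apply: (big_ind (fun x => psi x <= p)) => //.
    by move=> x y hx hy; rewrite Hmorph leUx hx hy.
  apply/idP/idP => [le | le]; first exact: le_trans (mono _ _ le) HJ.
  by rewrite /J; apply: (@big_join_ge _ _ _ q0 (fun q => psi q <= p) (fun q => q)).
have gm : forall x y, x <= y -> g x <= g y.
  by move=> x y le; rewrite key (le_trans _ le) // -key.
have gpsi : forall s, g (psi s) = s.
  move=> s; apply/le_anti; rewrite key lexx andbT; apply: Hfull.
  by rewrite -key.
have ELan : forall M : rep k Q, Lan psi M = Comp M g.
  move=> M; have Ef : floor psi = fun p => Some (g p).
    by apply: functional_extensionality => p; rewrite fS.
  change (LanH (floor psi) M = Comp M g); rewrite Ef; reflexivity.
split.
  move=> A B _; rewrite ELan.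
  have E : (fun p => setdiff (upQ A) (upQ B) (g p)) = setdiff (upP psi A) (upP psi B).
    apply: functional_extensionality => p; rewrite /setdiff /upQ /upP.
    by congr (_ && ~~ _); apply: eq_existsb => a; rewrite key.
  change (rep_iso (indicator k (fun p => setdiff (upQ A) (upQ B) (g p)))
                  (indicator k (setdiff (upP psi A) (upP psi B)))).
  rewrite E; exact: rep_iso_refl.
move=> M _ [Ss [HS Hiso]].
exists [seq (fun p => X (g p)) : pred P | X <- Ss]; split.
  move=> i; rewrite size_map => lt; rewrite (nth_map (fun _ => false)) //.
  have [sp fp] := HS i lt; move: sp fp; set X := nth _ Ss i => sp fp.
  split; last exact: (fin_pres_comp key gm fp).
  case: sp => [[s Xs] [cv zz]]; split; first by exists (psi s); rewrite gpsi.
  split.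
    move=> s1 p s2 h1 h2 l1 l2; exact: (cv _ _ _ h1 h2 (gm _ _ l1) (gm _ _ l2)).
  move=> p p' hp hp'; have [c [ac pc lc]] := zz _ _ hp hp'.
  exists (psi (g p) :: rcons (map psi c) p'); split.
  - rewrite /= all_rcons gpsi hp hp' /= all_map.
    by apply: sub_all ac => x /=; rewrite gpsi.
  - rewrite /= rcons_path last_map lc path_map.
    rewrite ge_comparable /= ?le_comparable -?key //.
    rewrite andbT; apply: sub_path pc => x y /=.
    case/orP => le; first by rewrite le_comparable // mono.
    by rewrite ge_comparable // mono.
  - by rewrite /= last_rcons.
rewrite ELan.
have Ed : forall Ss, Comp (dsum_seq [seq indicator k X | X <- Ss]) g =
    dsum_seq [seq indicator k X | X <- [seq (fun p => X (g p)) : pred P | X <- Ss]].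
  by elim => //= X Ss' IH; rewrite -IH.
rewrite -Ed; apply: comp_iso; [exact: gm | exact: Hiso].
Qed.
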